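(* Let $s\ge1$, $\theta\in\{0,1\}^s$, and suppose $f\in C^{|\theta|+1}(\mathbb{R}^s)$. Then for every $\alpha\in\mathbb{Z}^s$, $$\lim_{n\to\infty}\left|(-1)^{|\theta|}\,2^{(n+2)|\theta|+ns/2}\,d_{\theta,\alpha}^n(f)-\frac{D^\theta f\left(x_\alpha^n\right)}{\theta!}\right|=0.$$
   Context: Univariate Haar functions: $\psi_0:=\chi_{[0,1]}$ and $\psi_1:=\chi_{[0,\frac12]}-\chi_{[\frac12,1]}$. For $\theta\in\{0,1\}^s$ and $x\in\mathbb{R}^s$, $\psi_\theta(x):=\prod_{j=1}^s\psi_{\theta_j}(x_j)$. For $n\in\mathbb{N}_0$, $\alpha\in\mathbb{Z}^s$ the Haar coefficients are $d_{\theta,\alpha}^n(f):=2^{ns/2}\int_{\mathbb{R}^s}f(t)\,\psi_\theta(2^nt-\alpha)\,dt$. Let $\epsilon:=(1,\dots,1)\in\mathbb{Z}^s$ and $x_\alpha^n:=2^{-n}(\alpha+\frac12\epsilon)$. Multi-index notation: $|\theta|=\sum_j\theta_j$, $\theta!=\prod_j\theta_j!$, $D^\theta=\partial^{|\theta|}/\partial x_1^{\theta_1}\cdots\partial x_s^{\theta_s}$. *)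

(* Defs.v *)
From HB Require Import structures.
From mathcomp Require Import all_boot all_order all_algebra.
From mathcomp Require Import all_classical all_reals all_analysis.
Set Implicit Arguments. Unset Strict Implicit. Unset Printing Implicit Defensive.
Import Order.TTheory GRing.Theory Num.Theory.
Import numFieldNormedType.Exports.
Local Open Scope classical_set_scope.
Local Open Scope ring_scope.

Section HaarDefs.
Variable R : realType.

Definition evec (s : nat) (j : 'I_s) : 'rV[R]_s := delta_mx 0 j.

Definition partial (s : nat) (j : 'I_s) (g : 'rV[R]_s -> R) : 'rV[R]_s -> R :=
  fun x => 'D_(evec j) g x.

Definition Dseq (s : nat) (js : seq 'I_s) (g : 'rV[R]_s -> R) : 'rV[R]_s -> R :=
  foldr (@partial s) g js.

Definition Ck (s k : nat) (g : 'rV[R]_s -> R) : Prop :=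
  forall js : seq 'I_s, (size js <= k)%N ->
    continuous (Dseq js g) /\
    ((size js < k)%N -> forall (j : 'I_s) (x : 'rV[R]_s), derivable (Dseq js g) x (evec j)).

Definition mabs (s : nat) (theta : 'I_s -> bool) : nat := (\sum_(j < s) nat_of_bool (theta j))%N.
Definition mfact (s : nat) (theta : 'I_s -> bool) : nat := (\prod_(j < s) (nat_of_bool (theta j))`!)%N.

Definition Dtheta (s : nat) (theta : 'I_s -> bool) (g : 'rV[R]_s -> R) : 'rV[R]_s -> R :=
  Dseq [seq j <- enum 'I_s | theta j] g.

Definition ind01 (a b x : R) : R := if (a <= x) && (x <= b) then 1 else 0.
Definition psi (b : bool) (x : R) : R :=
  if b then ind01 0 (1/2) x - ind01 (1/2) 1 x else ind01 0 1 x.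

Definition psi_theta (s : nat) (theta : 'I_s -> bool) (x : 'rV[R]_s) : R :=
  \prod_(j < s) psi (theta j) (x ord0 j).

(* Lebesgue integral over R^s, realized as the iterated integral of
   one-dimensional Lebesgue integrals (equal to the integral w.r.t. the
   s-dimensional Lebesgue measure for integrable f, by Fubini). *)
Fixpoint intRn (s : nat) : ('rV[R]_s -> R) -> R :=
  match s with
  | 0 => fun g => g 0
  | s'.+1 => fun g =>
      (\int[@lebesgue_measure R]_(t in [set: R])
         intRn (fun y : 'rV[R]_s' => g (row_mx (t%:M : 'rV[R]_1) y)))%R
  end.

Definition rvZ (s : nat) (alpha : 'I_s -> int) : 'rV[R]_s := \row_j (alpha j)%:~R.

Definition haar_coef (s : nat) (theta : 'I_s -> bool) (n : nat) (alpha : 'I_s -> int)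
  (f : 'rV[R]_s -> R) : R :=
  (2 : R) `^ ((n * s)%:R / 2) *
  intRn (fun t : 'rV[R]_s => f t * psi_theta theta ((2 : R) ^+ n *: t - rvZ alpha)).

Definition xpt (s : nat) (n : nat) (alpha : 'I_s -> int) : 'rV[R]_s :=
  ((2 : R) ^+ n)^-1 *: (rvZ alpha + \row_(j < s) (1 / 2 : R)).

End HaarDefs.

(* Main.v *)
Require Import Defs.
From HB Require Import structures.
From mathcomp Require Import all_boot all_order all_algebra.
From mathcomp Require Import all_classical all_reals all_analysis.
From mathcomp Require Import ring lra.
Import Order.TTheory GRing.Theory Num.Theory.
Import numFieldNormedType.Exports.
Local Open Scope classical_set_scope.
Local Open Scope ring_scope.

Section OneD.
Variable R : realType.
Notation mu := (@lebesgue_measure R).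

Lemma J_itv (G : R -> R) l u :
  (\int[mu]_(t in [set: R]) (G t * ind01 l u t))%R = (\int[mu]_(t in `[l, u]) G t)%R.
Proof.
rewrite [RHS]Rintegral_mkcond; apply: eq_Rintegral => t _.
rewrite patchE /ind01 mem_setE in_itv /=.
by case: ifP => _; rewrite ?mulr1 ?mulr0.
Qed.

Lemma int_cont (G : R -> R) l u : continuous G ->
  mu.-integrable `[l, u] (EFin \o G).
Proof.
move=> cG; apply: continuous_compact_integrable; first exact: segment_compact.
exact: continuous_subspaceT.
Qed.

Lemma J_lin (G1 G2 : R -> R) a l u : continuous G1 -> continuous G2 ->
  (\int[mu]_(t in `[l, u]) (a * G1 t + G2 t))%R =
  a * (\int[mu]_(t in `[l, u]) G1 t)%R + (\int[mu]_(t in `[l, u]) G2 t)%R.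
Proof.
move=> c1 c2.
have i1 : mu.-integrable `[l, u] (EFin \o G1) by exact: int_cont.
have i2 : mu.-integrable `[l, u] (EFin \o G2) by exact: int_cont.
have i3 : mu.-integrable `[l, u] (EFin \o (fun t => a * G1 t)).
  by apply: int_cont => x; apply: cvgM; [exact: cvg_cst | exact: c1].
by rewrite (RintegralD _ i3 i2) // RintegralZl.
Qed.

Lemma J_cst (c l u : R) : l <= u ->
  (\int[mu]_(t in `[l, u]) c)%R = c * (u - l).
Proof.
move=> lu; rewrite Rintegral_cst //= lebesgue_measure_itv /= lte_fin.
move: lu; rewrite le_eqVlt => /predU1P [->|->] //=.
by rewrite ltxx subrr mulr0.
Qed.

Lemma J_bound (G : R -> R) (M l u : R) : l <= u -> continuous G ->
  (forall t, l <= t <= u -> `|G t| <= M) ->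
  `|(\int[mu]_(t in `[l, u]) G t)%R| <= M * (u - l).
Proof.
move=> lu cG HM.
apply: le_trans; first by apply: le_normr_Rintegral => //; exact: int_cont.
rewrite -J_cst //; apply: le_Rintegral => //.
- apply: int_cont => x; apply: continuous_comp; first exact: cG.
  exact: norm_continuous.
- by apply: int_cont => x; exact: cvg_cst.
Qed.

Lemma J_shift (G : R -> R) (l u d : R) : l <= u -> continuous G ->
  (\int[mu]_(t in `[l + d, u + d]) G t)%R =
  (\int[mu]_(t in `[l, u]) G (t + d))%R.
Proof.
move=> lu cG.
pose F := fun x : R => x + d.
have dF (x : R) : is_derive x (1 : R) F (1 : R).
  by rewrite /F -[X in is_derive _ _ _ X]addr0; apply: is_deriveD.
have F' : F^`()%classic = cst 1.
  by apply: funext => x; rewrite derive1E derive_val.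
have cF : continuous F.
  by move=> x; apply: continuousD => //; exact: cvg_cst.
have h1 : {in `[l, u] &, {homo F : x y / x < y}}.
  by move=> x y _ _ xy; rewrite /F ltrD2r.
have h2 : {in `]l, u[, continuous F^`()%classic}.
  by rewrite F' => x _; exact: cvg_cst.
have h3 : cvg (F^`()%classic x @[x --> l^'+]) by rewrite F'; exact: is_cvg_cst.
have h4 : cvg (F^`()%classic x @[x --> u^'-]) by rewrite F'; exact: is_cvg_cst.
have h5 : derivable_oo_LRcontinuous F l u.
  split.
  + by move=> x _; apply: ex_derive.
  + exact/cvg_at_right_filter/cF.
  + exact/cvg_at_left_filter/cF.
have h6 : {within `[F l, F u], continuous G} by exact: continuous_subspaceT.
rewrite /Rintegral -[l + d]/(F l) -[u + d]/(F u).
rewrite (integration_by_substitution_increasing lu h1 h2 h3 h4 h5 h6) F'.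
by congr fine; apply: eq_integral => x _ /=; rewrite mulr1.
Qed.

End OneD.

Set Implicit Arguments. Unset Strict Implicit. Unset Printing Implicit Defensive.

Section Multi.
Variable R : realType.
Notation mu := (@lebesgue_measure R).

Lemma rowmx0 s (t : R) (y : 'rV[R]_s) :
  (row_mx (t%:M : 'rV[R]_1) y : 'rV[R]_s.+1) ord0 ord0 = t.
Proof.
have -> : (ord0 : 'I_s.+1) = lshift s (ord0 : 'I_1) by apply: val_inj.
by rewrite (@row_mxEl _ 1 1 s) mxE.
Qed.

Lemma rowmxS s (t : R) (y : 'rV[R]_s) j :
  (row_mx (t%:M : 'rV[R]_1) y : 'rV[R]_s.+1) ord0 (lift ord0 j) = y ord0 j.
Proof.
have -> : (lift ord0 j : 'I_s.+1) = rshift 1 j by apply: val_inj.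
by rewrite (@row_mxEr _ 1 1 s).
Qed.

Lemma row_mx_near s (g : 'rV[R]_s.+1 -> R) (t0 : R) (y0 : 'rV[R]_s) (eps : R) :
  continuous g -> 0 < eps -> exists2 e : R, 0 < e & forall (t : R) (y : 'rV[R]_s), `|t0 - t| < e ->
  (forall j, `|y0 ord0 j - y ord0 j| < e) ->
  `|g (row_mx (t0%:M : 'rV[R]_1) y0) - g (row_mx (t%:M : 'rV[R]_1) y)| < eps.
Proof.
move=> cg ep.
have := cg (row_mx (t0%:M : 'rV[R]_1) y0).
move/cvgrPdist_lt => /(_ eps ep) /nbhs_ballP [e e0 He].
exists e => // t y ht hy; apply: He; split => // i j.
rewrite (ord1 i); case: (@split_ordP 1 s j) => k ->.
  by rewrite (ord1 k) !(@row_mxEl _ 1 1 s) !mxE /=.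
rewrite !(@row_mxEr _ 1 1 s); exact: hy.
Qed.


Definition box s (lo hi : 'I_s -> R) (y : 'rV[R]_s) : R :=
  \prod_(j < s) ind01 (lo j) (hi j) (y ord0 j).
Definition vol s (lo hi : 'I_s -> R) : R := \prod_(j < s) (hi j - lo j).
Definition II s (g : 'rV[R]_s -> R) (lo hi : 'I_s -> R) : R :=
  intRn (fun y => g y * box lo hi y).

Lemma box_row s lo hi (t : R) (y : 'rV[R]_s) :
  box lo hi (row_mx (t%:M : 'rV[R]_1) y : 'rV[R]_s.+1) =
  ind01 (lo ord0) (hi ord0) t * box (fun j => lo (lift ord0 j)) (fun j => hi (lift ord0 j)) y.
Proof.
rewrite /box big_ord_recl rowmx0; congr (_ * _).
by apply: eq_bigr => j _; rewrite rowmxS.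
Qed.

Lemma vol_S s (lo hi : 'I_s.+1 -> R) :
  vol lo hi = (hi ord0 - lo ord0) * vol (fun j => lo (lift ord0 j)) (fun j => hi (lift ord0 j)).
Proof. by rewrite /vol big_ord_recl. Qed.

Lemma tube s (g : 'rV[R]_s.+1 -> R) (lo hi : 'I_s -> R) (t0 : R) (eps : R) :
  continuous g -> 0 < eps ->
  \forall t \near t0, forall y : 'rV[R]_s, (forall j, lo j <= y ord0 j <= hi j) ->
    `|g (row_mx (t0%:M : 'rV[R]_1) y) - g (row_mx (t%:M : 'rV[R]_1) y)| < eps.
Proof.
move=> cg ep.
pose K := [set v : 'rV[R]_s | forall i, `[lo i, hi i]%classic (v ord0 i)].
have cK : compact K.
  by apply: (@rV_compact _ s (fun i => `[lo i, hi i]%classic)) => i; exact: segment_compact.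
pose P := (fun t y => `|g (row_mx (t0%:M : 'rV[R]_1) y) - g (row_mx (t%:M : 'rV[R]_1) y)| < eps).
have H : forall y0, K y0 -> \forall y \near y0 & t \near nbhs t0, P t y.
  move=> y0 Ky0.
  have e2 : 0 < eps / 2 by rewrite divr_gt0.
  have [e e0 He] := @row_mx_near s g t0 y0 (eps / 2) cg e2.
  exists (ball y0 e, ball t0 e) => /=.
    by split; exact: nbhsx_ballx.
  case=> y t /= [hy ht].
  have hy' : forall j, `|y0 ord0 j - y ord0 j| < e.
    by move=> j; case: hy => _ /(_ ord0 j).
  have h1 := He t0 y ltac:(by rewrite subrr normr0) hy'.
  have h2 := He t y ht hy'.
  rewrite /P (_ : _ - _ = (g (row_mx t0%:M y0) - g (row_mx t%:M y)) -
     (g (row_mx t0%:M y0) - g (row_mx t0%:M y))); last by ring.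
  apply: le_lt_trans; first exact: ler_normB.
  by rewrite (splitr eps) ltrD.
have HH : \forall t \near t0, K `<=` P t.
  exact: ((proj1 (compact_near_coveringP K)) cK R (nbhs t0) P _ H).
apply: filterS HH => t Ht y Hy; apply: Ht.
move=> i; rewrite /= in_itv /=; exact: Hy.
Qed.

Lemma cont_slice s (g : 'rV[R]_s.+1 -> R) (t : R) : continuous g ->
  continuous (fun y : 'rV[R]_s => g (row_mx (t%:M : 'rV[R]_1) y)).
Proof.
move=> cg y0; apply/(@cvgrPdist_lt _ _ _ (nbhs y0) (nbhs_filter y0)) => eps ep.
have [e e0 He] := @row_mx_near s g t y0 eps cg ep.
apply/nbhs_ballP; exists e => // y hy; apply: He.
  by rewrite subrr normr0.
by move=> j; case: hy => _ /(_ ord0 j).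
Qed.

Lemma cont_lin s (g1 g2 : 'rV[R]_s -> R) (a : R) : continuous g1 -> continuous g2 ->
  continuous (fun y => a * g1 y + g2 y).
Proof.
move=> c1 c2 y.
have -> : (fun y => a * g1 y + g2 y) = (fun y => a * g1 y) + g2 by [].
apply: continuousD; last exact: c2.
apply: (@continuousM _ _ (fun=> a) g1 y).
  exact: cst_continuous.
exact: c1.
Qed.

Definition Good s := forall lo hi : 'I_s -> R, (forall j, lo j <= hi j) ->
 [/\ (forall (g1 g2 : 'rV[R]_s -> R) (a : R), continuous g1 -> continuous g2 ->
        II (fun y => a * g1 y + g2 y) lo hi = a * II g1 lo hi + II g2 lo hi),
     (forall c : R, II (fun=> c) lo hi = c * vol lo hi) &
     (forall (g : 'rV[R]_s -> R) (M : R), continuous g ->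
        (forall y : 'rV[R]_s, (forall j, lo j <= y ord0 j <= hi j) -> `|g y| <= M) ->
        `|II g lo hi| <= M * vol lo hi)].

Lemma Good0 : Good 0.
Proof.
move=> lo hi _; rewrite /II /vol /box /= !big_ord0; split.
- by move=> g1 g2 a _ _; rewrite !mulr1.
- by move=> c; rewrite mulr1.
- by move=> g M _ HM; rewrite !mulr1; apply: HM => -[].
Qed.

Lemma vol_ge0 s (lo hi : 'I_s -> R) : (forall j, lo j <= hi j) -> 0 <= vol lo hi.
Proof. by move=> h; apply: prodr_ge0 => j _; rewrite subr_ge0. Qed.

Definition Phi s (g : 'rV[R]_s.+1 -> R) (lo hi : 'I_s.+1 -> R) (t : R) : R :=
  II (fun y => g (row_mx (t%:M : 'rV[R]_1) y)) (fun j => lo (lift ord0 j)) (fun j => hi (lift ord0 j)).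

Lemma Phi_cont s (G : Good s) (lo hi : 'I_s.+1 -> R) (h : forall j, lo j <= hi j)
  (g : 'rV[R]_s.+1 -> R) : continuous g -> continuous (Phi g lo hi).
Proof.
move=> cg t0; apply/cvgrPdist_le => eps ep.
have h' : forall j, lo (lift ord0 j) <= hi (lift ord0 j) by move=> j; exact: h.
have [Glin Gcst Gbd] := G _ _ h'.
set V := vol (fun j => lo (lift ord0 j)) (fun j => hi (lift ord0 j)).
have V0 : 0 <= V by exact: vol_ge0.
have e' : 0 < eps / (V + 1) by rewrite divr_gt0 // ltr_wpDl.
apply: filterS (tube (fun j => lo (lift ord0 j)) (fun j => hi (lift ord0 j)) t0 cg e').
move=> t Ht.
rewrite /Phi (_ : _ - _ = II (fun y => (-1) * g (row_mx t%:M y) + g (row_mx t0%:M y))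
   (fun j => lo (lift ord0 j)) (fun j => hi (lift ord0 j))); last first.
  by rewrite Glin; [ring | exact: cont_slice | exact: cont_slice].
apply: le_trans.
  apply: (Gbd _ (eps / (V + 1))); first by apply: cont_lin; exact: cont_slice.
  by move=> y Hy; rewrite mulN1r addrC ltW // Ht.
rewrite -/V; apply: (@le_trans _ _ (eps / (V + 1) * (V + 1))).
  rewrite ler_wpM2l ?ltW //.
  by rewrite ltrDl.
by rewrite divfK // gt_eqF // ltr_wpDl.
Qed.

Lemma II_S s (G : Good s) (lo hi : 'I_s.+1 -> R) (h : forall j, lo j <= hi j)
  (g : 'rV[R]_s.+1 -> R) : continuous g ->
  II g lo hi = (\int[mu]_(t in `[lo ord0, hi ord0]) Phi g lo hi t)%R.
Proof.
move=> cg.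
have h' : forall j, lo (lift ord0 j) <= hi (lift ord0 j) by move=> j; exact: h.
have [Glin Gcst Gbd] := G _ _ h'.
rewrite /II /= -J_itv; apply: eq_Rintegral => t _.
rewrite /Phi.
transitivity (II (fun y => ind01 (lo ord0) (hi ord0) t * g (row_mx t%:M y) + (fun=> 0) y)
   (fun j => lo (lift ord0 j)) (fun j => hi (lift ord0 j))).
  rewrite /II; congr intRn; apply: funext => y.
  by rewrite box_row addr0 mulrA [_ * ind01 _ _ _]mulrC.
rewrite Glin ?Gcst; first by rewrite /II; ring.
  exact: cont_slice.
exact: cst_continuous.
Qed.

Lemma box_in s (lo hi : 'I_s.+1 -> R) (t : R) (y : 'rV[R]_s) :
  lo ord0 <= t <= hi ord0 ->
  (forall j, lo (lift ord0 j) <= y ord0 j <= hi (lift ord0 j)) ->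
  forall j, lo j <= (row_mx (t%:M : 'rV[R]_1) y : 'rV[R]_s.+1) ord0 j <= hi j.
Proof.
move=> ht hy j; case: (unliftP ord0 j) => [j'|] ->.
  by rewrite rowmxS.
by rewrite rowmx0.
Qed.

Lemma GoodS s : Good s -> Good s.+1.
Proof.
move=> G lo hi h.
have h' : forall j, lo (lift ord0 j) <= hi (lift ord0 j) by move=> j; exact: h.
have [Glin Gcst Gbd] := G _ _ h'.
split.
- move=> g1 g2 a c1 c2.
  rewrite !(II_S G h) //; last exact: cont_lin.
  rewrite -J_lin; try exact: Phi_cont.
  apply: eq_Rintegral => t _; rewrite /Phi Glin //; exact: cont_slice.
- move=> c; rewrite (II_S G h); last exact: cst_continuous.
  rewrite /Phi.
  under eq_Rintegral do rewrite Gcst.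
  by rewrite J_cst // vol_S; ring.
- move=> g M cg HM; rewrite (II_S G h) // vol_S.
  rewrite (_ : M * _ = (M * vol (fun j => lo (lift ord0 j)) (fun j => hi (lift ord0 j))) * (hi ord0 - lo ord0)); last by ring.
  apply: J_bound => //; first exact: Phi_cont.
  move=> t ht; rewrite /Phi; apply: Gbd; first exact: cont_slice.
  move=> y hy; apply: HM; exact: box_in.
Qed.

Lemma Good_all s : Good s.
Proof. elim: s => [|s IH]; [exact: Good0 | exact: GoodS]. Qed.

End Multi.

Section Decomp.
Variable R : realType.
Notation mu := (@lebesgue_measure R).

Lemma int_ind (G : R -> R) l u : continuous G ->
  mu.-integrable [set: R] (EFin \o (fun t => G t * ind01 l u t)).
Proof.
move=> cG.
have -> : (EFin \o (fun t => G t * ind01 l u t)) = (EFin \o G) \_ `[l, u].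
  apply: funext => t; rewrite restrict_EFin /= patchE /ind01 mem_setE in_itv /=.
  by case: ifP => _; rewrite ?mulr1 ?mulr0.
by apply/(integrable_mkcond _ _).1 => //; exact: int_cont.
Qed.

Lemma cont_shift s (G : 'rV[R]_s -> R) (v : 'rV[R]_s) : continuous G ->
  continuous (fun y : 'rV[R]_s => G (y + v)).
Proof.
move=> cG y; apply: continuous_comp; last exact: cG.
apply: (@cvgD _ _ _ (nbhs y) (nbhs_filter y)); [exact: cvg_id | exact: cvg_cst].
Qed.

Lemma cont_scale s (g : 'rV[R]_s -> R) (a : R) : continuous g ->
  continuous (fun y => a * g y).
Proof.
move=> cg y; apply: (@continuousM _ _ (fun=> a) g y); last exact: cg.
exact: cst_continuous.
Qed.

Definition Dl s (d : R) (js : seq 'I_s) (g : 'rV[R]_s -> R) : 'rV[R]_s -> R :=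
  foldr (fun j G y => G y - G (y + d *: evec R j)) g js.

Lemma Dl_cont s d js (g : 'rV[R]_s -> R) : continuous g -> continuous (Dl d js g).
Proof.
move=> cg; elim: js => [|j js IH] //= y.
have h1 := IH y.
have h2 := @continuousN _ _ _ _ y (@cont_shift _ (Dl d js g) (d *: evec R j) IH y).
exact: (continuousD h1 h2).
Qed.

Lemma Dl_lin s d js (g1 g2 : 'rV[R]_s -> R) (a : R) :
  Dl d js (fun y => a * g1 y + g2 y) = (fun y => a * Dl d js g1 y + Dl d js g2 y).
Proof.
elim: js => [|j js IH] //=; apply: funext => y; rewrite IH; ring.
Qed.

Lemma Dl_scale s d js (g : 'rV[R]_s -> R) (a : R) :
  Dl d js (fun y => a * g y) = (fun y => a * Dl d js g y).
Proof.
elim: js => [|j js IH] //=; apply: funext => y; rewrite IH; ring.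
Qed.

Lemma row_shiftS s (t d : R) (y : 'rV[R]_s) j :
  (row_mx (t%:M : 'rV[R]_1) y : 'rV[R]_s.+1) + d *: evec R (lift ord0 j) =
  row_mx (t%:M : 'rV[R]_1) (y + d *: evec R j).
Proof.
apply/rowP => k; rewrite [LHS]mxE [X in _ + X]mxE /evec [X in _ + _ * X]mxE.
case: (unliftP ord0 k) => [k'|] ->.
  by rewrite !rowmxS !mxE (inj_eq (@lift_inj _ ord0)).
by rewrite !rowmx0 (negbTE (neq_lift _ _)) andbF mulr0 addr0.
Qed.

Lemma row_shift0 s (t d : R) (y : 'rV[R]_s) :
  (row_mx (t%:M : 'rV[R]_1) y : 'rV[R]_s.+1) + d *: evec R ord0 =
  row_mx ((t + d)%:M : 'rV[R]_1) y.
Proof.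
apply/rowP => k; rewrite [LHS]mxE [X in _ + X]mxE /evec [X in _ + _ * X]mxE.
case: (unliftP ord0 k) => [k'|] ->.
  by rewrite !rowmxS eq_sym (negbTE (neq_lift _ _)) andbF mulr0 addr0.
by rewrite !rowmx0 eqxx mulr1.
Qed.

Lemma Dl_row s d (js : seq 'I_s) (g : 'rV[R]_s.+1 -> R) (t : R) (y : 'rV[R]_s) :
  Dl d (map (lift ord0) js) g (row_mx (t%:M : 'rV[R]_1) y) =
  Dl d js (fun z => g (row_mx (t%:M : 'rV[R]_1) z)) y.
Proof.
elim: js y => [|j js IH] y //=.
by rewrite row_shiftS !IH.
Qed.

Definition thetas s (theta : 'I_s -> bool) : seq 'I_s := [seq j <- enum 'I_s | theta j].

Lemma thetasS s (theta : 'I_s.+1 -> bool) :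
  thetas theta = (if theta ord0 then ord0 :: map (lift ord0) (thetas (fun j => theta (lift ord0 j)))
                  else map (lift ord0) (thetas (fun j => theta (lift ord0 j)))).
Proof.
by rewrite /thetas enum_ordSl /= filter_map; case: ifP.
Qed.

Definition wfun (b : bool) (l d t : R) : R :=
  if b then ind01 l (l + d) t - ind01 (l + d) (l + d + d) t else ind01 l (l + d + d) t.

Definition Wt s (theta : 'I_s -> bool) (lo : 'I_s -> R) (d : R) (y : 'rV[R]_s) : R :=
  \prod_(j < s) wfun (theta j) (lo j) d (y ord0 j).

Definition hit s (theta : 'I_s -> bool) (lo : 'I_s -> R) (d : R) (j : 'I_s) : R :=
  lo j + (if theta j then d else d + d).

Lemma Wt_row s theta lo d (t : R) (y : 'rV[R]_s) :
  Wt theta lo d (row_mx (t%:M : 'rV[R]_1) y : 'rV[R]_s.+1) =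
  wfun (theta ord0) (lo ord0) d t * Wt (fun j => theta (lift ord0 j)) (fun j => lo (lift ord0 j)) d y.
Proof.
rewrite /Wt big_ord_recl rowmx0; congr (_ * _).
by apply: eq_bigr => j _; rewrite rowmxS.
Qed.

Lemma decomp s (theta : 'I_s -> bool) (lo : 'I_s -> R) (d : R) (g : 'rV[R]_s -> R) :
  0 <= d -> continuous g ->
  intRn (fun y => g y * Wt theta lo d y) = II (Dl d (thetas theta) g) lo (hit theta lo d).
Proof.
move=> d0; elim: s theta lo g => [|s IH] theta lo g cg.
  rewrite /II /Wt /box /thetas /= !big_ord0.
  by have := size_enum_ord 0; case: (enum 'I_0).
have hh : forall j, lo j <= hit theta lo d j.
  by move=> j; rewrite /hit lerDl; case: ifP => _ //; rewrite addr_ge0.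
have hh' : forall j, lo (lift ord0 j) <= hit theta lo d (lift ord0 j) by move=> j; exact: hh.
have [Glin Gcst Gbd] := Good_all hh'.
pose th' := (fun j => theta (lift ord0 j)).
pose lo' := (fun j => lo (lift ord0 j)).
pose Psi := fun t : R => II (Dl d (thetas th') (fun z => g (row_mx (t%:M : 'rV[R]_1) z))) lo' (hit th' lo' d).
have PsiE : Psi = Phi (Dl d (map (lift ord0) (thetas th')) g) lo (hit theta lo d).
  apply: funext => t; rewrite /Psi /Phi; congr II.
  by apply: funext => z; rewrite Dl_row.
have cPsi : continuous Psi.
  rewrite PsiE; apply: Phi_cont => //; first exact: Good_all.
  exact: Dl_cont.
have LHS : intRn (fun y => g y * Wt theta lo d y) =
    (\int[mu]_(t in [set: R]) (Psi t * wfun (theta ord0) (lo ord0) d t))%R.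
  rewrite /=; apply: eq_Rintegral => t _.
  transitivity (intRn (fun y => (wfun (theta ord0) (lo ord0) d t * g (row_mx (t%:M : 'rV[R]_1) y)) * Wt th' lo' d y)).
    by congr intRn; apply: funext => y; rewrite Wt_row; ring.
  rewrite IH; last first.
    by apply: cont_scale; exact: cont_slice.
  rewrite Dl_scale.
  transitivity (II (fun y => wfun (theta ord0) (lo ord0) d t * Dl d (thetas th') (fun z => g (row_mx (t%:M : 'rV[R]_1) z)) y + (fun=> 0) y) lo' (hit th' lo' d)).
    by congr II; apply: funext => y; rewrite addr0.
  rewrite Glin; last exact: cst_continuous.
    by rewrite Gcst mul0r addr0 mulrC.
  exact/Dl_cont/cont_slice.
rewrite LHS (II_S (@Good_all R s) hh); last exact: Dl_cont.
rewrite thetasS -/th' /wfun /hit; case E : (theta ord0).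
- under eq_Rintegral do rewrite mulrBr.
  rewrite RintegralB //; try exact: int_ind.
  rewrite !J_itv J_shift //; last by rewrite lerDl.
  have cPsi' : continuous (fun t => Psi (t + d)).
    move=> t; apply: continuous_comp; last exact: cPsi.
    by apply: cvgD; [exact: cvg_id | exact: cvg_cst].
  rewrite -RintegralB //; try exact: int_cont.
  apply: eq_Rintegral => t _.
  rewrite /Phi /= /Psi.
  transitivity (II (fun y => (-1) * Dl d (thetas th') (fun z => g (row_mx ((t + d)%:M : 'rV[R]_1) z)) y +
     Dl d (thetas th') (fun z => g (row_mx (t%:M : 'rV[R]_1) z)) y) lo' (hit th' lo' d)).
    rewrite Glin; [ring | exact/Dl_cont/cont_slice | exact/Dl_cont/cont_slice].
  congr II; apply: funext => y.
  by rewrite row_shift0 !Dl_row; ring.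
- rewrite J_itv -addrA -PsiE.
  by apply: eq_Rintegral => t _.
Qed.

End Decomp.

Section Deriv.
Variable R : realType.

Lemma D_shift s (G : 'rV[R]_s -> R) (w v x : 'rV[R]_s) :
  'D_v (fun y => G (y + w)) x = 'D_v G (x + w).
Proof.
rewrite /derive /comp /=.
by under eq_fun do rewrite -addrA.
Qed.

Lemma derivable_shift s (G : 'rV[R]_s -> R) (w v x : 'rV[R]_s) :
  derivable G (x + w) v -> derivable (fun y => G (y + w)) x v.
Proof.
rewrite /derivable /comp /=.
by under eq_fun do rewrite addrA.
Qed.

Lemma Dseq_shift s (js : seq 'I_s) (g : 'rV[R]_s -> R) (w : 'rV[R]_s) :
  Dseq js (fun y => g (y + w)) = (fun y => Dseq js g (y + w)).
Proof.
elim: js => [|j js IH] //=; apply: funext => x.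
by rewrite /partial IH D_shift.
Qed.

Lemma Ck_shift s k (g : 'rV[R]_s -> R) (w : 'rV[R]_s) :
  Ck k g -> Ck k (fun y => g (y + w)).
Proof.
move=> H js hs; have [c d] := H js hs; rewrite Dseq_shift; split.
  exact: cont_shift.
by move=> hl j x; apply: derivable_shift; exact: d.
Qed.

Lemma Dseq_sub s k (js : seq 'I_s) (g1 g2 : 'rV[R]_s -> R) :
  Ck k g1 -> Ck k g2 -> (size js <= k)%N ->
  Dseq js (fun y => g1 y - g2 y) = (fun y => Dseq js g1 y - Dseq js g2 y).
Proof.
move=> H1 H2; elim: js => [|j js IH] //= hs; apply: funext => x.
rewrite IH; last exact: ltnW.
rewrite /partial.
have d1 := (H1 js (ltnW hs)).2 hs j x.
have d2 := (H2 js (ltnW hs)).2 hs j x.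
have E : (Dseq js g1 - Dseq js g2) = (fun y => Dseq js g1 y - Dseq js g2 y).
  by apply: funext => y.
by rewrite -E deriveB.
Qed.

Lemma Ck_sub s k (g1 g2 : 'rV[R]_s -> R) :
  Ck k g1 -> Ck k g2 -> Ck k (fun y => g1 y - g2 y).
Proof.
move=> H1 H2 js hs; rewrite (Dseq_sub H1 H2 hs).
have [c1 d1] := H1 js hs; have [c2 d2] := H2 js hs.
have E : (Dseq js g1 - Dseq js g2) = (fun y => Dseq js g1 y - Dseq js g2 y).
  by apply: funext => y.
rewrite -E; split.
  by move=> x; apply: continuousB; [exact: c1 | exact: c2].
by move=> hl j x; apply: derivableB; [exact: d1 | exact: d2].
Qed.

Definition Dj s (d : R) (j : 'I_s) (G : 'rV[R]_s -> R) : 'rV[R]_s -> R :=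
  fun y => G y - G (y + d *: evec R j).

Lemma Ck_Dj s k d j (g : 'rV[R]_s -> R) : Ck k g -> Ck k (Dj d j g).
Proof. by move=> H; apply: Ck_sub => //; exact: Ck_shift. Qed.

Lemma Dseq_Dj s k d j (js : seq 'I_s) (g : 'rV[R]_s -> R) : Ck k g -> (size js <= k)%N ->
  Dseq js (Dj d j g) = Dj d j (Dseq js g).
Proof.
move=> H hs; rewrite /Dj (Dseq_sub H _ hs); last exact: Ck_shift.
by rewrite Dseq_shift.
Qed.

Lemma Dj_comm s d i j (G : 'rV[R]_s -> R) : Dj d i (Dj d j G) = Dj d j (Dj d i G).
Proof.
apply: funext => y; rewrite /Dj.
rewrite [y + d *: evec R j + d *: evec R i]addrAC; ring.
Qed.

Lemma Dl_cons s d j (js : seq 'I_s) (g : 'rV[R]_s -> R) :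
  Dl d (j :: js) g = Dl d js (Dj d j g).
Proof.
elim: js => [|i js IH] //=.
change (Dj d j (Dj d i (Dl d js g)) = Dj d i (Dl d js (Dj d j g))).
by rewrite -[Dl d js (Dj d j g)]IH /= -/(Dj d j _) Dj_comm.
Qed.

Lemma mvt_dir s (G : 'rV[R]_s -> R) (y v : 'rV[R]_s) (d : R) :
  continuous G -> (forall x, derivable G x v) -> 0 < d ->
  exists2 c : R, 0 < c < d & G (y + d *: v) - G y = d * 'D_v G (y + c *: v).
Proof.
move=> cG dG d0.
pose phi := fun t : R => G (y + t *: v).
have dphi t : is_derive t (1 : R) phi ('D_v G (y + t *: v)).
  have Eq : (fun h : R => h^-1 *: ((phi \o shift t) (h *: (1 : R)) - phi t)) =
            (fun h : R => h^-1 *: ((G \o shift (y + t *: v)) (h *: v) - G (y + t *: v))).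
    apply: funext => h; rewrite /phi /comp /=.
    rewrite -[h%:A]/(h * 1) mulr1 scalerDl.
    by rewrite [h *: v + (y + t *: v)]addrCA addrA.
  have hd : derivable phi t 1 by rewrite /derivable Eq; exact: dG.
  have DE : 'D_1 phi t = 'D_v G (y + t *: v) by rewrite /derive Eq.
  rewrite -DE; exact: derivableP.
have cphi : continuous phi.
  move=> t; apply: continuous_comp; last exact: cG.
  apply: cvgD; first exact: cvg_cst.
  exact: scalel_continuous.
have cw : {within `[0, d], continuous phi} by exact: continuous_subspaceT.
have [c cI E] := MVT d0 (fun x _ => dphi x) cw.
exists c; first by move: cI; rewrite in_itv.
by move: E; rewrite /phi scale0r addr0 subr0 mulrC.
Qed.

Lemma Dl_mvt s k (d : R) (js : seq 'I_s) (g : 'rV[R]_s -> R) :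
  0 < d -> Ck k g -> (size js < k)%N -> forall y : 'rV[R]_s, exists z : 'rV[R]_s,
  (forall i, `|z ord0 i - y ord0 i| <= (size js)%:R * d) /\
  Dl d js g y = (- d) ^+ size js * Dseq js g z.
Proof.
move=> d0; elim: js g => [|j js IH] g H hs y.
  by exists y; split => [i|]; rewrite ?subrr ?normr0 ?mul0r ?mul1r.
have hs' : (size js < k)%N by apply: ltn_trans hs.
have [z' [Hz' E']] := IH (Dj d j g) (Ck_Dj d j H) hs' y.
have [c0 d0'] := H js (ltnW hs').
have [c /andP [c0' cd] Ec] := @mvt_dir s (Dseq js g) z' (evec R j) d c0 (d0' hs' j) d0.
exists (z' + c *: evec R j); split.
  move=> i; rewrite /evec !mxE eqxx /=.
  rewrite addrAC; apply: le_trans; first exact: ler_normD.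
  rewrite /= mulrSr mulrDl mul1r; apply: lerD; first exact: Hz'.
  rewrite normrM (gtr0_norm c0'); apply: le_trans (ltW cd).
  case: (_ == _).
    by rewrite normr1 mulr1.
  by rewrite normr0 mulr0 ltW.
rewrite Dl_cons E' (Dseq_Dj _ _ H (ltnW hs')) /Dj /= /partial.
rewrite -[Dseq js g z' - _]opprB Ec exprS; ring.
Qed.

End Deriv.

Section Main.
Variable R : realType.

Lemma ind_aff (a b c m t : R) : 0 < c ->
  ind01 a b (c * t - m) = ind01 ((a + m) / c) ((b + m) / c) t.
Proof.
move=> c0; rewrite /ind01 ler_pdivrMr // ler_pdivlMr //.
by rewrite lerBrDr lerBlDr [t * c]mulrC.
Qed.

Lemma two_pow_gt0 n : 0 < (2 : R) ^+ n.
Proof. by rewrite exprn_gt0. Qed.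

Lemma psiW s n (alpha : 'I_s -> int) (theta : 'I_s -> bool) (y : 'rV[R]_s) :
  psi_theta theta ((2 : R) ^+ n *: y - rvZ R alpha) =
  Wt theta (fun j => (alpha j)%:~R / 2 ^+ n) ((2 ^+ n)^-1 / 2) y.
Proof.
rewrite /psi_theta /Wt; apply: eq_bigr => j _.
rewrite !mxE /psi /wfun.
have h0 := two_pow_gt0 n.
have hn : (2 : R) ^+ n != 0 by rewrite gt_eqF.
case: (theta j); rewrite !ind_aff //.
  by congr (ind01 _ _ _ - ind01 _ _ _); field.
by congr (ind01 _ _ _); field.
Qed.

Lemma mfact1 s (theta : 'I_s -> bool) : mfact theta = 1%N.
Proof. by rewrite /mfact big1 // => j _; case: (theta j). Qed.

Lemma size_thetas s (theta : 'I_s -> bool) : size (thetas theta) = mabs theta.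
Proof.
rewrite /thetas /mabs size_filter -sum1_count.
by rewrite big_mkcond /= -(big_enum _ _) /=; apply: eq_bigr => j _; case: (theta j).
Qed.

Lemma pow_mabs s (theta : 'I_s -> bool) (x : R) :
  x ^+ mabs theta = \prod_(j < s) (if theta j then x else 1).
Proof.
rewrite /mabs -prodrXr; apply: eq_bigr => j _; case: (theta j).
  by rewrite expr1.
by rewrite expr0.
Qed.

Lemma KV1 s n (alpha : 'I_s -> int) (theta : 'I_s -> bool) :
  let h := (2 : R) ^+ n in let d := h^-1 / 2 in
  let lo := (fun j => (alpha j)%:~R / h) in
  (-1) ^+ mabs theta * 2 ^+ ((n + 2) * mabs theta) * 2 ^+ (n * s) * (- d) ^+ mabs theta
    * vol lo (hit theta lo d) = 1.
Proof.
move=> h d lo.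
have hn : h != 0 by rewrite gt_eqF // two_pow_gt0.
rewrite exprM exprM.
rewrite (_ : (2 : R) ^+ n ^+ s = \prod_(j < s) 2 ^+ n); last by rewrite prodr_const card_ord.
rewrite /vol !pow_mabs -!big_split /=.
rewrite big1 // => j _; rewrite /hit; case: (theta j).
  rewrite addrAC subrr add0r /d exprD /h; field.
  by rewrite /h in hn.
rewrite addrAC subrr add0r /d /h; field.
by rewrite /h in hn.
Qed.

Lemma le_sum_abs s (alpha : 'I_s -> int) i :
  `|(alpha i)%:~R : R| <= \sum_(j < s) `|(alpha j)%:~R : R|.
Proof.
by rewrite (bigD1 i) //= lerDl; apply: sumr_ge0 => j _.
Qed.

Lemma box_abs (lo y d : R) : 0 <= d -> lo <= y <= lo + d -> `|y| <= `|lo| + d.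
Proof.
move=> d0 /andP [h1 h2].
rewrite -[y](subrK lo) addrC; apply: le_trans; first exact: ler_normD.
rewrite lerD2l ger0_norm ?subr_ge0 //.
by rewrite lerBlDr addrC.
Qed.

End Main.

Unset Implicit Arguments.

Theorem theorem3p2 (R : realType) (s : nat) (hs : (1 <= s)%N)
  (theta : 'I_s -> bool) (f : 'rV[R]_s -> R)
  (hf : Ck (mabs theta).+1 f) (alpha : 'I_s -> int) :
  (fun n : nat =>
     `| (-1) ^+ mabs theta
          * (2 : R) `^ ((((n + 2) * mabs theta)%N)%:R + (n * s)%:R / 2)
          * haar_coef theta n alpha f
        - Dtheta theta f (xpt R n alpha) / (mfact theta)%:R |) @ \oo --> (0 : R).
Proof.
set k := mabs theta.
have cf : continuous f by have := (hf [::] isT).1; exact.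
have hsz : (size (thetas theta) <= k.+1)%N by rewrite size_thetas leqW.
have cD : continuous (Dtheta theta f) by have := (hf _ hsz).1; exact.
apply/cvgrPdist_le => eps ep.
have e2 : 0 < eps / 2 by rewrite divr_gt0.
have [eta eta0 Heta] : exists2 eta : R, 0 < eta & forall z : 'rV[R]_s,
    (forall i, `|z ord0 i| < eta) -> `|Dtheta theta f 0 - Dtheta theta f z| < eps / 2.
  have := cD 0; move/cvgrPdist_lt => /(_ _ e2) /nbhs_ballP [eta eta0 He].
  exists eta => // z hz; apply: He; split => // i' i.
  by rewrite (ord1 i') /ball /= mxE sub0r normrN; exact: hz.
pose A := \sum_(j < s) `|(alpha j)%:~R : R|.
have A0 : 0 <= A by apply: sumr_ge0 => j _.
pose C := A + 1 + k%:R.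
have C0 : 0 < C by rewrite ltr_wpDr // ltr_wpDl.
exists (Num.Def.archi_bound (C / eta)) => // n /= hn.
rewrite sub0r normrN normr_id mfact1 divr1.
pose h := (2 : R) ^+ n.
have h0 : 0 < h by exact: two_pow_gt0.
pose d := h^-1 / 2.
have d0 : 0 < d by rewrite divr_gt0 // invr_gt0.
pose lo := fun j => (alpha j)%:~R / h.
pose hi := hit theta lo d.
have hlh : forall j, lo j <= hi j.
  by move=> j; rewrite /hi /hit lerDl; case: (theta j); rewrite ltW // addr_gt0.
have [Glin Gcst Gbd] := Good_all hlh.
have Hhaar : haar_coef theta n alpha f =
    2 `^ ((n * s)%:R / 2) * II (Dl d (thetas theta) f) lo hi.
  rewrite /haar_coef; congr (_ * _).
  rewrite -decomp ?ltW //; congr intRn; apply: funext => y.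
  by rewrite psiW.
have Hpow : (2 : R) `^ (((n + 2) * k)%:R + (n * s)%:R / 2) * 2 `^ ((n * s)%:R / 2) =
    2 ^+ ((n + 2) * k) * 2 ^+ (n * s).
  rewrite powRD; last by apply/implyP => _; rewrite pnatr_eq0.
  rewrite -mulrA -powRD; last by apply/implyP => _; rewrite pnatr_eq0.
  by rewrite -splitr !powR_mulrn.
pose c := (- d) ^+ k.
have c0 : c != 0 by rewrite expf_neq0 // oppr_eq0 gt_eqF.
pose x := xpt R n alpha.
pose E := fun y => c^-1 * Dl d (thetas theta) f y + (fun=> - Dtheta theta f x) y.
have cE : continuous E by apply: cont_lin; [exact: Dl_cont | exact: cst_continuous].
have HS : II (Dl d (thetas theta) f) lo hi = c * II E lo hi + c * Dtheta theta f x * vol lo hi.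
  rewrite -Gcst -Glin //; last exact: cst_continuous.
  congr II; apply: funext => y; rewrite /E /=; field.
  exact: c0.
rewrite Hhaar.
rewrite (_ : (-1) ^+ k * 2 `^ (((n + 2) * k)%:R + (n * s)%:R / 2) *
   (2 `^ ((n * s)%:R / 2) * II (Dl d (thetas theta) f) lo hi) =
   (-1) ^+ k * (2 `^ (((n + 2) * k)%:R + (n * s)%:R / 2) * 2 `^ ((n * s)%:R / 2)) *
   II (Dl d (thetas theta) f) lo hi); last by ring.
rewrite Hpow HS -/x mulrA.
set K := (-1) ^+ k * 2 ^+ ((n + 2) * k) * 2 ^+ (n * s).
have KV : K * c * vol lo hi = 1 by exact: (@KV1 R s n alpha theta).
have V0 : 0 < vol lo hi.
  apply: prodr_gt0 => j _; rewrite /hi /hit addrAC subrr add0r.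
  by case: (theta j); rewrite // addr_gt0.
have KE : K * (c * II E lo hi + c * Dtheta theta f x * vol lo hi) - Dtheta theta f x =
    (K * c) * II E lo hi.
  rewrite mulrDr !mulrA.
  rewrite (_ : K * c * Dtheta theta f x * vol lo hi = Dtheta theta f x * (K * c * vol lo hi)); last by ring.
  by rewrite KV mulr1 addrK.
rewrite KE.
have Kc0 : 0 < K * c.
  have : 0 < K * c * vol lo hi by rewrite KV.
  by rewrite pmulr_lgt0.
rewrite normrM gtr0_norm //.
apply: (@le_trans _ _ (K * c * (eps * vol lo hi))).
  rewrite ler_pM2l //; apply: Gbd => // y hy.
  have hk : (size (thetas theta) < k.+1)%N by rewrite size_thetas.
  have [z [Hz Ez]] := @Dl_mvt R s k.+1 d (thetas theta) f d0 hf hk y.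
  rewrite /E /= Ez size_thetas -/k -/c mulKf //.
  change (Dseq (thetas theta) f z) with (Dtheta theta f z).
  have Ch : C / h < eta.
    have b1 := @archi_boundP R (C / eta) (ltW (divr_gt0 C0 eta0)).
    have b2 : (Num.Def.archi_bound (C / eta))%:R <= n%:R :> R by rewrite ler_nat.
    have b3 : n%:R < h.
      by rewrite /h -natrX ltr_nat; apply: ltn_expl.
    have b4 : C / eta < h by apply: lt_le_trans b1 _; apply: le_trans b2 (ltW b3).
    by rewrite ltr_pdivrMr // mulrC -ltr_pdivrMr.
  have u0 : 0 < h^-1 by rewrite invr_gt0.
  have Hzi : forall i, `|z ord0 i| < eta.
    move=> i; apply: le_lt_trans Ch.
    rewrite -[z ord0 i](subrK (y ord0 i)); apply: le_trans; first exact: ler_normD.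
    have := Hz i; rewrite size_thetas -/k => hz.
    have hyi : `|y ord0 i| <= `|lo i| + (d + d).
      apply: box_abs; first by rewrite ltW // addr_gt0.
      have := hy i; case/andP => -> /= hyh; apply: le_trans hyh _.
      rewrite /hi /hit lerD2l.
      by case: (theta i) => //; rewrite lerDr ltW.
    have la : `|lo i| <= A * h^-1.
      rewrite /lo normrM (gtr0_norm u0) ler_wpM2r ?(ltW u0) //; exact: le_sum_abs.
    apply: le_trans (lerD hz hyi) _.
    apply: le_trans (_ : k%:R * d + (A * h^-1 + (d + d)) <= _).
      by rewrite lerD2l lerD2r.
    have p : 0 <= k%:R * h^-1 by rewrite mulr_ge0 // ltW.
    rewrite /C /d; lra.
  have Hxi : forall i, `|x ord0 i| < eta.
    move=> i; apply: le_lt_trans Ch.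
    rewrite /x /xpt !mxE -/h normrM (gtr0_norm u0) mulrC ler_wpM2r ?(ltW u0) //.
    apply: le_trans; first exact: ler_normD.
    rewrite /C -addrA lerD ?le_sum_abs //.
    rewrite ger0_norm ?divr_ge0 // ler_wpDr // ler_pdivrMr // mul1r ler1n //.
  apply: le_trans; first exact: (ler_distD (Dtheta theta f 0)).
  rewrite distrC (splitr eps) lerD // ltW //.
    exact: Heta.
  exact: Heta.
by rewrite mulrCA KV mulr1.
Qed.
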